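(* Let $\mathcal{SB}=\langle\mathcal{L},A,\to,\text{supp}\rangle$ be an SBAF and $S\subseteq Sent(A)$ a compatible set of sentences. Then $Arg_w(S)$ is admissible.
   Context: A language is a triple $\mathcal{L}=\langle L,\overline{\cdot},n\rangle$: $L$ is a nonempty set of sentences; $\overline{\cdot}$ assigns to each $s\in L$ a set $\overline{s}\subseteq L$ of sentences incompatible with $s$, and is symmetric; $n$ is a partial naming function assigning to an argument $a$ a sentence $n(a)\in L$ (if undefined, put $\overline{n(a)}:=\emptyset$), with $\overline{n(\langle\{t\},t\rangle)}=\emptyset$. An argument is a pair $a=\langle Prem(a),Conc(a)\rangle$ with $Prem(a)$ a nonempty finite subset of $L$ and $Conc(a)\in L$; $Sent(a):=Prem(a)\cup\{Conc(a)\}$, $Sent(E):=\bigcup_{a\in E}Sent(a)$. Argument $a$ attacks $b$ ($a\to b$) if $Conc(a)\in\overline{s}$ for some $s\in Sent(b)$ or $Conc(a)\in\overline{n(b)}$. An SBAF is $\langle\mathcal{L},A,\to,\text{supp}\rangle$ with $A$ a finite set of arguments. For $E\subseteq A$: $E$ defends $a\in A$ if for every $b\in A$ with $b\to a$ some element of $E$ attacks $b$; $E$ is conflict-free if no $a,b\in E$ with $a\to b$; admissible if conflict-free and defends all its elements. $S$ is compatible if no $s,t\in S$ with $s\in\overline t$. $Arg_s(S):=\{a\in A\mid Prem(a)\subseteq S\text{ and }\overline{n(a)}\cap S=\emptyset\}$; $R^S(E):=\{a\in A\mid a\in Arg_s(S)\text{ and }E\text{ defends }a\}$. For compatible $S$,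 $Init(S)$ is the largest admissible subset of $\{a\in A\mid Sent(a)\subseteq S\text{ and }\overline{n(a)}\cap S=\emptyset\}$, and the weak argument set $Arg_w(S)$ is the $\subseteq$-least set $E\subseteq A$ with $Init(S)\subseteq E$ and $R^S(E)=E$. *)

(* Defs.v *)
From HB Require Import structures.
From mathcomp Require Import all_boot finmap.
Set Implicit Arguments. Unset Strict Implicit. Unset Printing Implicit Defensive.
Local Open Scope fset_scope.

(* Sentences are the elements of a choiceType T (L := all of T).
   An argument is a pair <Prem, Conc> with Prem a finite set of sentences. *)
Definition argument (T : choiceType) := ({fset T} * T)%type.

Section SBAF.
Variables (T : choiceType).
(* ov s t  means  t \in \overline{s} *)
Variable ov : T -> T -> Prop.
Variable n : argument T -> option T.

Definition Prem (a : argument T) : {fset T} := a.1.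
Definition Conc (a : argument T) : T := a.2.
Definition in_Sent (a : argument T) (s : T) : Prop := s \in Prem a \/ s = Conc a.

(* t \in \overline{n(a)}, with \overline{n(a)} = empty when n(a) is undefined *)
Definition in_ov_name (a : argument T) (t : T) : Prop :=
  match n a with Some u => ov u t | None => False end.

Definition is_language : Prop :=
  (exists t : T, True) /\
  (forall s t, ov s t -> ov t s) /\
  (forall t u, ~ in_ov_name ([fset t], t) u).

Definition is_argument (a : argument T) : Prop := Prem a != fset0.

Definition attacks (a b : argument T) : Prop :=
  (exists s, in_Sent b s /\ ov s (Conc a)) \/ in_ov_name b (Conc a).

Variable A : {fset argument T}.

Definition in_SentA (s : T) : Prop := exists2 a, a \in A & in_Sent a s.

Definition defends (E : argument T -> Prop) (a : argument T) : Prop :=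
  forall b, b \in A -> attacks b a -> exists c, E c /\ attacks c b.

Definition conflict_free (E : argument T -> Prop) : Prop :=
  forall a b, E a -> E b -> ~ attacks a b.

Definition admissible (E : argument T -> Prop) : Prop :=
  conflict_free E /\ forall a, E a -> defends E a.

Definition compatible (S : T -> Prop) : Prop :=
  forall s t, S s -> S t -> ~ ov t s.

Definition Arg_s (S : T -> Prop) (a : argument T) : Prop :=
  a \in A /\ (forall s, s \in Prem a -> S s) /\ (forall t, in_ov_name a t -> ~ S t).

Definition R_S (S : T -> Prop) (E : argument T -> Prop) (a : argument T) : Prop :=
  Arg_s S a /\ defends E a.

Definition init_cand (S : T -> Prop) (a : argument T) : Prop :=
  a \in A /\ (forall s, in_Sent a s -> S s) /\ (forall t, in_ov_name a t -> ~ S t).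

(* Init(S): the largest admissible subset of init_cand S, i.e. the union of
   all admissible subsets of it (for compatible S this union is admissible,
   hence the largest one). *)
Definition Init (S : T -> Prop) (a : argument T) : Prop :=
  exists E : argument T -> Prop,
    [/\ forall b, E b -> init_cand S b, admissible E & E a].

(* Arg_w(S): the least E with Init(S) <= E and R^S(E) = E, i.e. the
   intersection of all such E. *)
Definition Arg_w (S : T -> Prop) (a : argument T) : Prop :=
  forall E : argument T -> Prop,
    (forall b, Init S b -> E b) -> (forall b, R_S S E b <-> E b) -> E a.

End SBAF.

(* Main.v *)
Require Import Defs.
From HB Require Import structures.
From mathcomp Require Import all_boot finmap.
From Stdlib Require Import Classical_Prop.
Set Implicit Arguments. Unset Strict Implicit.
Local Open Scope fset_scope.

Section Proof8.
Variables (T : choiceType) (ov : T -> T -> Prop) (n : argument T -> option T)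
  (A : {fset argument T}) (S : T -> Prop).
Hypothesis compS : compatible ov S.

Fixpoint F (k : nat) : argument T -> Prop :=
  match k with
  | 0 => Init ov n A S
  | m.+1 => R_S ov n A S (F m)
  end.

Lemma defends_mono (E1 E2 : argument T -> Prop) a :
  (forall x, E1 x -> E2 x) -> defends ov n A E1 a -> defends ov n A E2 a.
Proof. move=> H D b bA att; have [c [c1 c2]] := D b bA att; exists c; split; auto. Qed.

Lemma Init_R a : Init ov n A S a -> R_S ov n A S (Init ov n A S) a.
Proof.
move=> [E [sub [cf df] Ea]]; have [aA [sS nS]] := sub a Ea.
split; first by split; [|split]; [|move=> s sp; apply: sS; left|].
apply: (defends_mono (E1:=E)); last by apply: df.
move=> x Ex; exists E; split=> //.
Qed.

Lemma F_step k a : F k a -> F k.+1 a.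
Proof.
elim: k a => [|k IH] a /=; first exact: Init_R.
move=> [H1 H2]; split=> //; apply: (defends_mono (E1:=F k)) => //.
Qed.

Lemma F_mono i j a : i <= j -> F i a -> F j a.
Proof.
move=> /subnKC <-; elim: (j - i) => [|d IH]; first by rewrite addn0.
move=> Fa; rewrite addnS; apply: F_step; exact: IH.
Qed.

Lemma F_A k a : F k a -> a \in A.
Proof.
case: k => [|k] /=; first by move=> [E [sub _ Ea]]; case: (sub a Ea).
by move=> [[]].
Qed.

Lemma F_cf k : conflict_free ov n (F k).
Proof.
elim: k => [|k IH].
  move=> a b [Ea [suba _ Ha]] [Eb [subb _ Hb]].
  have [_ [sa na]] := suba a Ha; have [_ [sb nb]] := subb b Hb.
  move=> [[s [sbs o]]|nm].
    have Sa : S (Conc a) by apply: sa; right.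
    exact: (compS Sa (sb s sbs)).
  by apply: (nb _ nm); apply: sa; right.
move=> a b [[aA _] da] [_ db] att.
have [c [Fc catt]] := db a aA att.
have [d [Fd datt]] := da c (F_A Fc) catt.
exact: (IH d c Fd Fc datt).
Qed.

Definition U a := exists k, F k a.

Lemma fin_collect a (s : seq (argument T)) :
  (forall b, b \in s -> attacks ov n b a -> exists c, U c /\ attacks ov n c b) ->
  exists k, forall b, b \in s -> attacks ov n b a -> exists c, F k c /\ attacks ov n c b.
Proof.
elim: s => [|x s IH] H; first by exists 0.
have [k Hk] : exists k, forall b, b \in s -> attacks ov n b a -> exists c, F k c /\ attacks ov n c b.
  by apply: IH => b bs; apply: H; rewrite in_cons bs orbT.
have [m Hm] : exists m, attacks ov n x a -> exists c, F m c /\ attacks ov n c x.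
  have [[c [[j Fj] cx]]|nx] := classic (exists c, U c /\ attacks ov n c x).
    by exists j => _; exists c.
  exists 0 => ax; exfalso; apply: nx; apply: H ax; by rewrite in_cons eqxx.
exists (maxn k m) => b; rewrite in_cons => /orP [/eqP ->|bs] ab.
  have [c [Fc cb]] := Hm ab; exists c; split=> //; apply: F_mono Fc; exact: leq_maxr.
have [c [Fc cb]] := Hk b bs ab; exists c; split=> //; apply: F_mono Fc; exact: leq_maxl.
Qed.

Lemma U_fix a : R_S ov n A S U a <-> U a.
Proof.
split.
  move=> [As D].
  have [k Hk] := fin_collect (s := A) (fun b bA ab => D b bA ab).
  exists k.+1; split=> // b bA ab; exact: Hk.
move=> [[|k] Fk].
  have [As D] := Init_R Fk; split=> //; apply: (defends_mono (E1 := Init ov n A S)) => //.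
  by move=> x Ix; exists 0.
have [As D] := Fk; split=> //; apply: (defends_mono (E1 := F k)) => // x Fx; by exists k.
Qed.

Lemma U_W a : U a <-> Arg_w ov n A S a.
Proof.
split.
  move=> [k Fk] E HI HE; elim: k a Fk => [|k IH] a /=; first exact: HI.
  move=> [As D]; apply/HE; split=> //; exact: (defends_mono (E1 := F k)).
move=> W; apply: W; first by move=> b Ib; exists 0.
exact: U_fix.
Qed.

End Proof8.

Theorem mainTheorem8 (T : choiceType) (ov : T -> T -> Prop)
  (n : argument T -> option T) (A : {fset argument T})
  (supp : argument T -> argument T -> Prop) (S : T -> Prop) :
  is_language ov n ->
  (forall a, a \in A -> is_argument a) ->
  (forall s, S s -> in_SentA A s) ->
  compatible ov S ->
  admissible ov n A (Arg_w ov n A S).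
Proof.
move=> _ _ _ cS; split.
  move=> a b /U_W [i Fi] /U_W [j Fj].
  apply: (F_cf cS (k := maxn i j)).
    apply: F_mono Fi; exact: leq_maxl.
  apply: F_mono Fj; exact: leq_maxr.
move=> a /U_W Ua.
have [_ D] := (proj2 (@U_fix T ov n A S a) Ua).
apply: (defends_mono (E1 := U ov n A S)) => // x; exact: (proj1 (@U_W T ov n A S x)).
Qed.
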